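(* Let $(\Theta,\mathbf{Q},\leq)$ be a $\Theta$-projective system of size $t$ in a Hom-finite triangulated $R$-category $\mathcal{T}$, let $M\in\mathfrak{F}(\Theta)$ and $i:=\min(M)$. Then there exists a distinguished triangle $N\to Q_0(M)\xrightarrow{\varepsilon_M}M\to N[1]$ in $\mathcal{T}$ such that: (a) $N\in\mathfrak{F}(\Theta)$ and $Q_0(M)\in\mathrm{add}(\bigoplus_{j\ge i}Q(j))$; (b) $\min(M)<\min(N)$ if $M\neq0$; (c) $\varepsilon_M$ is a $\mathcal{P}(\Theta)$-precover of $M$.
   Context: A Hom-finite triangulated $R$-category: $R$ a commutative ring, $\mathcal{T}$ triangulated with $R$-module Hom-sets that are finitely generated, $R$-bilinear composition and $R$-linear shift. $\mathfrak{F}(\mathcal{X})$: objects $M$ admitting distinguished triangles $M_{k-1}\to M_k\to X_k\to M_{k-1}[1]$ ($k=0,\dots,n$), $M_{-1}=0=X_0$, $M_n=M$, $X_k\in\mathcal{X}$ for $k\ge1$. A $\Theta$-projective system of size $t$: $\le$ a linear order on $[1,t]$; $\Theta(i)$ non-zero with $\mathrm{Hom}(\Theta(j),\Theta(i))=0$ for $j>i$; $Q(i)$ indecomposable with $Q=\bigoplus Q(i)$ satisfying $\mathrm{Hom}(Q,\Theta(j)[\pm1])=0$ for all $j$; for each $i$ a distinguished triangle $K(i)\to Q(i)\to\Theta(i)\to K(i)[1]$ with $K(i)\in\mathfrak{F}(\{\Theta(j):j>i\})$, $\mathrm{Hom}(K(i)[1],\Theta(i))=0$. For $M\in\mathfrak{F}(\Theta)$,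 $[M:\Theta(i)]$ is the number of indices $k$ with $X_k\simeq\Theta(i)$ in a $\Theta$-filtration of $M$ (independent of the filtration in this setting); $\mathrm{Supp}_\Theta(M)=\{i:[M:\Theta(i)]\ne0\}$; $\min(M)$ is the $\le$-minimum of $\mathrm{Supp}_\Theta(M)$ for $M\neq0$, and $\min(0)=+\infty$. $\mathcal{P}(\Theta)=\{Z:\mathrm{Hom}(Z,L[1])=0\ \forall L\in\mathfrak{F}(\Theta)\}$; a $\mathcal{P}(\Theta)$-precover of $M$ is a morphism $X\to M$ with $X\in\mathcal{P}(\Theta)$ through which every morphism from an object of $\mathcal{P}(\Theta)$ to $M$ factors. $\mathrm{add}(X)$ denotes direct summands of finite direct sums of copies of $X$; $j\ge i$ refers to the order $\le$. *)

(* Defs.v *)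
From HB Require Import structures.
From mathcomp Require Import all_boot all_order all_algebra.
Set Implicit Arguments. Unset Strict Implicit. Unset Printing Implicit Defensive.
Import GRing.Theory.
Local Open Scope ring_scope.

Record RCat (R : comPzRingType) := {
  obj :> Type;
  Mor : obj -> obj -> lmodType R;
  idm : forall X, Mor X X;
  mcomp : forall X Y Z, Mor Y Z -> Mor X Y -> Mor X Z;
  compA : forall X Y Z W (h : Mor Z W) (g : Mor Y Z) (f : Mor X Y),
    mcomp h (mcomp g f) = mcomp (mcomp h g) f;
  comp1m : forall X Y (f : Mor X Y), mcomp (idm Y) f = f;
  compm1 : forall X Y (f : Mor X Y), mcomp f (idm X) = f;
  compDl : forall X Y Z (g1 g2 : Mor Y Z) (f : Mor X Y),
    mcomp (g1 + g2) f = mcomp g1 f + mcomp g2 f;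
  compDr : forall X Y Z (g : Mor Y Z) (f1 f2 : Mor X Y),
    mcomp g (f1 + f2) = mcomp g f1 + mcomp g f2;
  compZl : forall X Y Z (a : R) (g : Mor Y Z) (f : Mor X Y),
    mcomp (a *: g) f = a *: mcomp g f;
  compZr : forall X Y Z (a : R) (g : Mor Y Z) (f : Mor X Y),
    mcomp g (a *: f) = a *: mcomp g f }.

Arguments Mor {R C} X Y : rename.
Arguments idm {R C} X : rename.
Arguments mcomp {R C X Y Z} g f : rename.

Section CatDefs.
Variables (R : comPzRingType) (C : RCat R).

Definition is_iso (X Y : C) (f : Mor X Y) : Prop :=
  exists g : Mor Y X, mcomp g f = idm X /\ mcomp f g = idm Y.

Definition iso (X Y : C) : Prop := exists f : Mor X Y, is_iso f.

Definition is_zero (X : C) : Prop := idm X = 0.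

Definition is_biprod (X Y S : C) (i1 : Mor X S) (i2 : Mor Y S)
    (p1 : Mor S X) (p2 : Mor S Y) : Prop :=
  [/\ mcomp p1 i1 = idm X, mcomp p2 i2 = idm Y, mcomp p1 i2 = 0,
      mcomp p2 i1 = 0 & mcomp i1 p1 + mcomp i2 p2 = idm S].

Definition is_dsum (I : finType) (P : pred I) (A : I -> C) (S : C)
    (inj : forall k, Mor (A k) S) (proj : forall k, Mor S (A k)) : Prop :=
  [/\ (forall k, P k -> mcomp (proj k) (inj k) = idm (A k)),
      (forall k l, P k -> P l -> k != l -> mcomp (proj k) (inj l) = 0)
    & \sum_(k | P k) mcomp (inj k) (proj k) = idm S].

Definition is_dsum_of (I : finType) (P : pred I) (A : I -> C) (S : C) : Prop :=
  exists (inj : forall k, Mor (A k) S) (proj : forall k, Mor S (A k)),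
    @is_dsum I P A S inj proj.

Definition in_add (X Y : C) : Prop :=
  exists (n : nat) (S : C), is_dsum_of (I := 'I_n) predT (fun _ => X) S /\
    exists (Y' : C) (i1 : Mor Y S) (i2 : Mor Y' S) (p1 : Mor S Y) (p2 : Mor S Y'),
      is_biprod i1 i2 p1 p2.

Definition indecomposable (X : C) : Prop :=
  ~ is_zero X /\
  forall (A B : C) (i1 : Mor A X) (i2 : Mor B X) (p1 : Mor X A) (p2 : Mor X B),
    is_biprod i1 i2 p1 p2 -> is_zero A \/ is_zero B.

Definition hom_finite : Prop :=
  forall X Y : C, exists (n : nat) (v : 'I_n -> Mor X Y),
    forall f : Mor X Y, exists c : 'I_n -> R, f = \sum_(k < n) c k *: v k.

End CatDefs.

Record Triangulated (R : comPzRingType) (C : RCat R) := {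
  sh : C -> C;
  shm : forall X Y : C, Mor X Y -> Mor (sh X) (sh Y);
  shm1 : forall X : C, shm (idm X) = idm (sh X);
  shmM : forall (X Y Z : C) (g : Mor Y Z) (f : Mor X Y),
    shm (mcomp g f) = mcomp (shm g) (shm f);
  shmD : forall (X Y : C) (f g : Mor X Y), shm (f + g) = shm f + shm g;
  shmZ : forall (X Y : C) (a : R) (f : Mor X Y), shm (a *: f) = a *: shm f;
  shm_bij : forall X Y : C, bijective (@shm X Y);
  sh_esurj : forall Y : C, exists X : C, iso (sh X) Y;
  has_zero : exists Z : C, is_zero Z;
  has_biprod : forall X Y : C, exists (S : C) (i1 : Mor X S) (i2 : Mor Y S)
      (p1 : Mor S X) (p2 : Mor S Y), is_biprod i1 i2 p1 p2;
  dist : forall X Y Z : C, Mor X Y -> Mor Y Z -> Mor Z (sh X) -> Prop;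
  TR1_id : forall X Z : C, is_zero Z ->
    dist (idm X) (0 : Mor X Z) (0 : Mor Z (sh X));
  TR1_ext : forall (X Y : C) (f : Mor X Y),
    exists (Z : C) (g : Mor Y Z) (h : Mor Z (sh X)), dist f g h;
  TR1_iso : forall (X Y Z X' Y' Z' : C) (f : Mor X Y) (g : Mor Y Z)
      (h : Mor Z (sh X)) (f' : Mor X' Y') (g' : Mor Y' Z') (h' : Mor Z' (sh X'))
      (a : Mor X X') (b : Mor Y Y') (c : Mor Z Z'),
    dist f g h -> is_iso a -> is_iso b -> is_iso c ->
    mcomp b f = mcomp f' a -> mcomp c g = mcomp g' b -> mcomp (shm a) h = mcomp h' c ->
    dist f' g' h';
  TR2 : forall (X Y Z : C) (f : Mor X Y) (g : Mor Y Z) (h : Mor Z (sh X)),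
    dist f g h <-> dist g h (- shm f);
  TR3 : forall (X Y Z X' Y' Z' : C) (f : Mor X Y) (g : Mor Y Z)
      (h : Mor Z (sh X)) (f' : Mor X' Y') (g' : Mor Y' Z') (h' : Mor Z' (sh X'))
      (a : Mor X X') (b : Mor Y Y'),
    dist f g h -> dist f' g' h' -> mcomp b f = mcomp f' a ->
    exists c : Mor Z Z', mcomp c g = mcomp g' b /\ mcomp (shm a) h = mcomp h' c;
  TR4 : forall (X Y Z Z' X' Y' : C) (f : Mor X Y) (g : Mor Y Z)
      (u : Mor Y Z') (d : Mor Z' (sh X))
      (v : Mor Z X') (e : Mor X' (sh Y))
      (w : Mor Z Y') (k : Mor Y' (sh X)),
    dist f u d -> dist g v e -> dist (mcomp g f) w k ->
    exists (a : Mor Z' Y') (b : Mor Y' X'),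
      [/\ dist a b (mcomp (shm u) e), mcomp a u = mcomp w g, mcomp k a = d,
          mcomp b w = v & mcomp e b = mcomp (shm f) k] }.

Arguments sh {R C} T X : rename.
Arguments shm {R C} T {X Y} f : rename.
Arguments dist {R C} T {X Y Z} f g h : rename.

Section TriDefs.
Variables (R : comPzRingType) (C : RCat R) (T : Triangulated C).

(* An X-filtration of M (P = the class X).  Indexing shift: fM k = M_{k-1},
   so the k-th triangle (k = 0..n) is M_{k-1} -> M_k -> X_k -> M_{k-1}[1]. *)
Record filtration (P : C -> Prop) (M : C) := {
  flen : nat;
  fM : nat -> C;
  fX : nat -> C;
  fa : forall k, Mor (fM k) (fM k.+1);
  fb : forall k, Mor (fM k.+1) (fX k);
  fc : forall k, Mor (fX k) (sh T (fM k));
  f_dist : forall k, (k <= flen)%N -> dist T (fa k) (fb k) (fc k);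
  f_start : is_zero (fM 0);
  f_X0 : is_zero (fX 0);
  f_XP : forall k, (1 <= k <= flen)%N -> P (fX k);
  f_end : fM flen.+1 = M }.

Definition inF (P : C -> Prop) (M : C) : Prop := inhabited (filtration P M).

Record proj_system (t : nat) := {
  ps_le : rel 'I_t;
  ps_Theta : 'I_t -> C;
  ps_Q : 'I_t -> C;
  ps_Qsum : C;
  ps_K : 'I_t -> C;
  ps_a : forall i, Mor (ps_K i) (ps_Q i);
  ps_b : forall i, Mor (ps_Q i) (ps_Theta i);
  ps_c : forall i, Mor (ps_Theta i) (sh T (ps_K i));
  ps_refl : reflexive ps_le;
  ps_anti : antisymmetric ps_le;
  ps_trans : transitive ps_le;
  ps_total : total ps_le;
  ps_Theta_nz : forall i, ~ is_zero (ps_Theta i);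
  ps_Theta_dir : forall i j, ps_le i j && (i != j) ->
    forall f : Mor (ps_Theta j) (ps_Theta i), f = 0;
  ps_Q_indec : forall i, indecomposable (ps_Q i);
  ps_Qsum_dsum : is_dsum_of predT ps_Q ps_Qsum;
  ps_Q_shift1 : forall j (f : Mor ps_Qsum (sh T (ps_Theta j))), f = 0;
  ps_Q_shiftm1 : forall j (Y : C), iso (sh T Y) (ps_Theta j) ->
    forall f : Mor ps_Qsum Y, f = 0;
  ps_dist : forall i, dist T (ps_a i) (ps_b i) (ps_c i);
  ps_K_filt : forall i,
    inF (fun X => exists j, ps_le i j && (i != j) /\ iso X (ps_Theta j)) (ps_K i);
  ps_K_hom : forall i (f : Mor (sh T (ps_K i)) (ps_Theta i)), f = 0 }.

Variables (t : nat) (PS : proj_system t).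

Definition ThetaCls (X : C) : Prop := exists j, iso X (ps_Theta PS j).

(* i in Supp_Theta computed from the filtration F, i.e. [M:Theta(i)] <> 0 *)
Definition inSuppF (M : C) (F : filtration ThetaCls M) (i : 'I_t) : Prop :=
  exists k, (1 <= k <= flen F)%N /\ iso (fX F k) (ps_Theta PS i).

(* minF F o : o is the <=-minimum of the support (None = +infinity) *)
Definition minF (M : C) (F : filtration ThetaCls M) (o : option 'I_t) : Prop :=
  match o with
  | None => forall i, ~ inSuppF F i
  | Some i => inSuppF F i /\ forall j, inSuppF F j -> ps_le PS i j
  end.

Definition lt_opt (o1 o2 : option 'I_t) : bool :=
  match o1, o2 with
  | Some i, Some j => ps_le PS i j && (i != j)
  | Some _, None => true
  | None, _ => false
  end.

Definition ge_opt (o : option 'I_t) (j : 'I_t) : bool :=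
  match o with Some i => ps_le PS i j | None => false end.

Definition inPTheta (Z : C) : Prop :=
  forall L : C, inF ThetaCls L -> forall f : Mor Z (sh T L), f = 0.

Definition is_precover (X M : C) (eps : Mor X M) : Prop :=
  inPTheta X /\
  forall (Z : C) (f : Mor Z M), inPTheta Z -> exists g : Mor Z X, f = mcomp eps g.

End TriDefs.

(* Main.v *)
Require Import Defs.
From mathcomp Require Import all_boot all_order all_algebra.
From Stdlib Require Import ProofIrrelevance.
Set Implicit Arguments. Unset Strict Implicit. Unset Printing Implicit Defensive.
Import GRing.Theory.
Local Open Scope ring_scope.



Section Basic.
Variables (R : comPzRingType) (C : RCat R).

Lemma cA (X Y Z W : C) (h : Mor Z W) (g : Mor Y Z) (f : Mor X Y) :
  mcomp h (mcomp g f) = mcomp (mcomp h g) f.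
Proof. exact: Defs.compA. Qed.
Lemma c1m (X Y : C) (f : Mor X Y) : mcomp (idm Y) f = f.
Proof. exact: comp1m. Qed.
Lemma cm1 (X Y : C) (f : Mor X Y) : mcomp f (idm X) = f.
Proof. exact: compm1. Qed.
Lemma cDl (X Y Z : C) (g1 g2 : Mor Y Z) (f : Mor X Y) :
  mcomp (g1 + g2) f = mcomp g1 f + mcomp g2 f.
Proof. exact: compDl. Qed.
Lemma cDr (X Y Z : C) (g : Mor Y Z) (f1 f2 : Mor X Y) :
  mcomp g (f1 + f2) = mcomp g f1 + mcomp g f2.
Proof. exact: compDr. Qed.
Lemma c0m (X Y Z : C) (f : Mor X Y) : mcomp (0 : Mor Y Z) f = 0.
Proof. by apply: (addrI (mcomp (0 : Mor Y Z) f)); rewrite -cDl !addr0. Qed.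

Lemma cm0 (X Y Z : C) (g : Mor Y Z) : mcomp g (0 : Mor X Y) = 0.
Proof. by apply: (addrI (mcomp g (0 : Mor X Y))); rewrite -cDr !addr0. Qed.
Lemma cNl (X Y Z : C) (g : Mor Y Z) (f : Mor X Y) : mcomp (- g) f = - mcomp g f.
Proof. by apply: (addrI (mcomp g f)); rewrite -cDl !subrr c0m. Qed.
Lemma cNr (X Y Z : C) (g : Mor Y Z) (f : Mor X Y) : mcomp g (- f) = - mcomp g f.
Proof. by apply: (addrI (mcomp g f)); rewrite -cDr !subrr cm0. Qed.
Lemma cBl (X Y Z : C) (g1 g2 : Mor Y Z) (f : Mor X Y) :
  mcomp (g1 - g2) f = mcomp g1 f - mcomp g2 f.
Proof. by rewrite cDl cNl. Qed.
Lemma cBr (X Y Z : C) (g : Mor Y Z) (f1 f2 : Mor X Y) :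
  mcomp g (f1 - f2) = mcomp g f1 - mcomp g f2.
Proof. by rewrite cDr cNr. Qed.

Lemma zero_src (X Y : C) (f : Mor X Y) : is_zero X -> f = 0.
Proof. by move=> z; rewrite -(cm1 f) z cm0. Qed.
Lemma zero_tgt (X Y : C) (f : Mor Y X) : is_zero X -> f = 0.
Proof. by move=> z; rewrite -(c1m f) z c0m. Qed.

Lemma c_suml (I : Type) (r : seq I) (P : pred I) (X Y Z : C)
  (F : I -> Mor Y Z) (f : Mor X Y) :
  mcomp (\sum_(k <- r | P k) F k) f = \sum_(k <- r | P k) mcomp (F k) f.
Proof.
by rewrite (big_morph (fun g => mcomp g f) (fun a b => cDl a b f) (c0m Z f)).
Qed.
Lemma c_sumr (I : Type) (r : seq I) (P : pred I) (X Y Z : C)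
  (g : Mor Y Z) (F : I -> Mor X Y) :
  mcomp g (\sum_(k <- r | P k) F k) = \sum_(k <- r | P k) mcomp g (F k).
Proof.
by rewrite (big_morph (fun f => mcomp g f) (fun a b => cDr g a b) (cm0 X g)).
Qed.

Lemma iso_id (X : C) : is_iso (idm X).
Proof. by exists (idm X); rewrite c1m. Qed.
Lemma iso_Nid (X : C) : is_iso (- idm X).
Proof. by exists (- idm X); rewrite cNl cNr opprK c1m. Qed.
Lemma iso_sym (X Y : C) : iso X Y -> iso Y X.
Proof. by case=> f [g [h1 h2]]; exists g; exists f. Qed.
Lemma iso_trans (X Y Z : C) : iso X Y -> iso Y Z -> iso X Z.
Proof.
case=> f [g [h1 h2]] [f' [g' [h1' h2']]]; exists (mcomp f' f);
exists (mcomp g g'); split.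
  by rewrite -cA (cA g' f') h1' c1m.
by rewrite -cA (cA f g) h2 c1m.
Qed.
Lemma iso_refl (X : C) : iso X X.
Proof. by exists (idm X); exact: iso_id. Qed.
End Basic.

Section Tri.
Variables (R : comPzRingType) (C : RCat R) (T : Triangulated C).
Local Notation sh := (sh T).
Local Notation shm := (shm T).
Local Notation dist := (dist T).

Lemma shm0 (X Y : C) : shm (0 : Mor X Y) = 0.
Proof. by apply: (addrI (shm (0 : Mor X Y))); rewrite -shmD !addr0. Qed.
Lemma shmN (X Y : C) (f : Mor X Y) : shm (- f) = - shm f.
Proof. by apply: (addrI (shm f)); rewrite -shmD !subrr shm0. Qed.
Lemma shmM' (X Y Z : C) (g : Mor Y Z) (f : Mor X Y) :
  shm (mcomp g f) = mcomp (shm g) (shm f).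
Proof. exact: shmM. Qed.
Lemma shm1 (X : C) : shm (idm X) = idm (sh X).
Proof. exact: Defs.shm1. Qed.
Lemma shm_inj (X Y : C) (f g : Mor X Y) : shm f = shm g -> f = g.
Proof. exact: (bij_inj (shm_bij T X Y)). Qed.
Lemma shm_surj (X Y : C) (F : Mor (sh X) (sh Y)) : exists f, F = shm f.
Proof.
case: (shm_bij T X Y) => g _ gK; exists (g F); by rewrite gK.
Qed.
Lemma zero_sh (X : C) : is_zero X -> is_zero (sh X).
Proof. by move=> z; rewrite /is_zero -shm1 z shm0. Qed.
Lemma iso_shm (X Y : C) (f : Mor X Y) : is_iso f -> is_iso (shm f).
Proof.
case=> g [h1 h2]; exists (shm g); by rewrite -!shmM' h1 h2 !shm1.
Qed.
Lemma iso_sh (X Y : C) : iso X Y -> iso (sh X) (sh Y).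
Proof. by case=> f /iso_shm; exists (shm f). Qed.

Lemma trot (X Y Z : C) (f : Mor X Y) (g : Mor Y Z) (h : Mor Z (sh X)) :
  dist f g h -> dist g h (- shm f).
Proof. exact: (proj1 (TR2 f g h)). Qed.
Lemma trotinv (X Y Z : C) (f : Mor X Y) (g : Mor Y Z) (h : Mor Z (sh X)) :
  dist g h (- shm f) -> dist f g h.
Proof. exact: (proj2 (TR2 f g h)). Qed.

Lemma dist_iso (X Y Z X' Y' Z' : C) (f : Mor X Y) (g : Mor Y Z)
      (h : Mor Z (sh X)) (f' : Mor X' Y') (g' : Mor Y' Z') (h' : Mor Z' (sh X'))
      (a : Mor X X') (b : Mor Y Y') (c : Mor Z Z') :
    dist f g h -> is_iso a -> is_iso b -> is_iso c ->
    mcomp b f = mcomp f' a -> mcomp c g = mcomp g' b ->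
    mcomp (shm a) h = mcomp h' c -> dist f' g' h'.
Proof. exact: TR1_iso. Qed.

Lemma distNN1 (X Y Z : C) (f : Mor X Y) (g : Mor Y Z) (h : Mor Z (sh X)) :
  dist f g h -> dist (- f) (- g) h.
Proof.
move=> d; apply: (dist_iso d (iso_id X) (iso_Nid Y) (iso_id Z)).
- by rewrite cm1 cNl c1m.
- by rewrite c1m cNr cm1 opprK.
- by rewrite shm1 c1m cm1.
Qed.
Lemma distNN2 (X Y Z : C) (f : Mor X Y) (g : Mor Y Z) (h : Mor Z (sh X)) :
  dist f g h -> dist f (- g) (- h).
Proof.
move=> d; apply: (dist_iso d (iso_id X) (iso_id Y) (iso_Nid Z)).
- by rewrite cm1 c1m.
- by rewrite cm1 cNl c1m.
- by rewrite shm1 c1m cNr cm1 opprK.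
Qed.
Lemma distNN3 (X Y Z : C) (f : Mor X Y) (g : Mor Y Z) (h : Mor Z (sh X)) :
  dist f g h -> dist (- f) g (- h).
Proof. by move=> /distNN1 /distNN2; rewrite opprK. Qed.

Lemma zero_exists : exists Z : C, is_zero Z.
Proof. exact: has_zero. Qed.

Lemma dist_id0 (X Z : C) : is_zero Z ->
  dist (idm X) (0 : Mor X Z) (0 : Mor Z (sh X)).
Proof. exact: TR1_id. Qed.
Lemma dist_0id (X Z : C) : is_zero Z ->
  dist (0 : Mor Z X) (idm X) (0 : Mor X (sh Z)).
Proof.
move=> z; apply/trotinv; rewrite shm0 oppr0; exact: dist_id0 (zero_sh z).
Qed.

Lemma dist_comp1 (X Y Z : C) (f : Mor X Y) (g : Mor Y Z) (h : Mor Z (sh X)) :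
  dist f g h -> mcomp g f = 0.
Proof.
move=> d; case: zero_exists => Z0 z0.
have [c [e1 _]] := TR3 (dist_id0 X z0) d (a := idm X) (b := f) erefl.
by rewrite -e1 cm0.
Qed.
Lemma dist_comp2 (X Y Z : C) (f : Mor X Y) (g : Mor Y Z) (h : Mor Z (sh X)) :
  dist f g h -> mcomp h g = 0.
Proof. by move/trot/dist_comp1. Qed.
Lemma dist_comp3 (X Y Z : C) (f : Mor X Y) (g : Mor Y Z) (h : Mor Z (sh X)) :
  dist f g h -> mcomp (shm f) h = 0.
Proof. by move/trot/trot/dist_comp1; rewrite cNl => /eqP; rewrite oppr_eq0 => /eqP. Qed.

Lemma dist_cov (X Y Z : C) (f : Mor X Y) (g : Mor Y Z) (h : Mor Z (sh X))
  (W : C) (u : Mor W Y) : dist f g h -> mcomp g u = 0 -> exists v, u = mcomp f v.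
Proof.
move=> d gu; case: zero_exists => Z0 z0.
have d1 := trot (dist_id0 W z0).
have := TR3 (a := u) (b := 0) d1 (trot d); rewrite c0m gu => /(_ erefl) [c [_ e2]].
case: (shm_surj c) => v cv; subst c; exists v; move: e2.
by rewrite shm1 cNr cm1 cNl -shmM' => /oppr_inj /shm_inj.
Qed.
Lemma dist_contra (X Y Z : C) (f : Mor X Y) (g : Mor Y Z) (h : Mor Z (sh X))
  (W : C) (u : Mor Y W) : dist f g h -> mcomp u f = 0 -> exists v, u = mcomp v g.
Proof.
move=> d uf; case: zero_exists => Z0 z0.
have := TR3 (a := 0) (b := u) d (dist_0id W z0); rewrite c0m uf => /(_ erefl) [c [e1 _]].
by exists c; rewrite e1 c1m.
Qed.

Lemma dist_zero_mid (X Y Z : C) (f : Mor X Y) (g : Mor Y Z) (h : Mor Z (sh X)) :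
  dist f g h -> is_zero X -> is_zero Z -> is_zero Y.
Proof.
move=> d zx zz; have [v ev] := dist_contra (u := idm Y) d (zero_src _ zx).
by rewrite /is_zero ev (zero_src v zz) c0m.
Qed.

Lemma dist_mono (X Y Z : C) (f : Mor X Y) (g : Mor Y Z) (h : Mor Z (sh X)) :
  dist f g h -> is_zero Z -> forall W (u : Mor W X), mcomp f u = 0 -> u = 0.
Proof.
move=> d zz W u fu; apply: shm_inj; rewrite shm0.
have [v ->] := dist_cov (u := shm u) (trot (trot d)) ltac:(by rewrite cNl -shmM' fu shm0 oppr0).
by rewrite (zero_src h zz) c0m.
Qed.

Lemma dist_iso_of_zero (X Y Z : C) (f : Mor X Y) (g : Mor Y Z) (h : Mor Z (sh X)) :
  dist f g h -> is_zero Z -> is_iso f.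
Proof.
move=> d zz; have [v ev] := dist_cov (u := idm Y) d (zero_tgt _ zz).
exists v; split=> //; apply/eqP; rewrite -subr_eq0; apply/eqP.
apply: (dist_mono d zz); by rewrite cBr cA -ev c1m cm1 subrr.
Qed.

Lemma unshift (X Y Z : C) (f : Mor X Y) (g : Mor Y Z) (h : Mor Z (sh X)) :
  dist (shm f) (shm g) (shm h) -> dist f g (- h).
Proof.
move=> /distNN1 d; apply/trotinv/trotinv/trotinv; by rewrite shmN opprK.
Qed.

Lemma split_dist (A B S : C) (i1 : Mor A S) (i2 : Mor B S) (p1 : Mor S A)
  (p2 : Mor S B) : is_biprod i1 i2 p1 p2 -> dist i1 p2 (0 : Mor B (sh A)).
Proof.
case=> e11 e22 e12 e21 eid.
have [Z [g [h d]]] := TR1_ext T i1.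
have h0 : h = 0.
  have e := dist_comp3 d.
  by rewrite -[h]c1m -shm1 -e11 shmM' -cA e cm0.
have [psi epsi] := dist_contra (u := p2) d e21.
have gi1 : mcomp g i1 = 0 by exact: dist_comp1 d.
apply: (dist_iso d (iso_id A) (iso_id S) (c := psi)).
- exists (mcomp g i2); split; last by rewrite cA -epsi e22.
  apply/eqP; rewrite -subr_eq0; apply/eqP.
  have E : mcomp i2 p2 = idm S - mcomp i1 p1 by rewrite -eid addrAC subrr add0r.
  have [v ->] := dist_contra (u := mcomp (mcomp g i2) psi - idm Z) (trot d)
    ltac:(by rewrite cBl -!cA -epsi c1m E cBr cm1 cA gi1 c0m subr0 subrr).
  by rewrite h0 cm0.
- by rewrite c1m cm1.
- by rewrite cm1 epsi.
- by rewrite shm1 c1m h0 c0m.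
Qed.
End Tri.



Section Filt.
Variables (R : comPzRingType) (C : RCat R) (T : Triangulated C).
Local Notation sh := (sh T).
Local Notation shm := (shm T).
Local Notation dist := (dist T).

Definition castM (X X' Y Y' : C) (e1 : X = X') (e2 : Y = Y') (f : Mor X Y) :
  Mor X' Y' :=
  match e1 in _ = X0 return Mor X0 Y' with
  | erefl => match e2 in _ = Y0 return Mor X Y0 with erefl => f end end.

Lemma dist_cast (X X' Y Y' Z Z' : C) (e1 : X = X') (e2 e2' : Y = Y')
  (e3 e3' : Z = Z') (e4 : sh X = sh X') (f : Mor X Y) (g : Mor Y Z)
  (h : Mor Z (sh X)) :
  dist f g h -> dist (castM e1 e2 f) (castM e2' e3 g) (castM e3' e4 h).
Proof.
move=> d; case: X' / e1 e4 => e4; case: Y' / e2 e2' => e2'.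
case: Z' / e3 e3' => e3'.
by rewrite (proof_irrelevance _ e2' erefl) (proof_irrelevance _ e3' erefl)
  (proof_irrelevance _ e4 erefl).
Qed.

Definition ext_obj (n : nat) (Mo : nat -> C) (X : C) (k : nat) : C :=
  if k == n.+2 then X else Mo k.
Definition ext_objX (n : nat) (Xo : nat -> C) (Y : C) (k : nat) : C :=
  if k == n.+1 then Y else Xo k.

Lemma ext_lo n Mo X k : (k <= n)%N -> Mo k = ext_obj n Mo X k.
Proof. move=> H; rewrite /ext_obj ifF //; apply/eqP => E; move: H; rewrite E.
  by rewrite ltnNge leqnSn. Qed.
Lemma ext_lo1 n Mo X k : (k <= n)%N -> Mo k.+1 = ext_obj n Mo X k.+1.
Proof. move=> H; rewrite /ext_obj ifF //; apply/eqP => E; move: H.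
  by case: E => ->; rewrite ltnn. Qed.
Lemma extX_lo n Xo Y k : (k <= n)%N -> Xo k = ext_objX n Xo Y k.
Proof. move=> H; rewrite /ext_objX ifF //; apply/eqP => E; move: H; rewrite E.
  by rewrite ltnn. Qed.
Lemma ext_mid n Mo X A k : k = n.+1 -> Mo n.+1 = A -> A = ext_obj n Mo X k.
Proof. by move=> -> <-; rewrite /ext_obj ifF // eqSS; apply/negbTE; rewrite neq_ltn ltnSn. Qed.
Lemma ext_mid1 n Mo X k : k = n.+1 -> X = ext_obj n Mo X k.+1.
Proof. by move=> ->; rewrite /ext_obj eqxx. Qed.
Lemma extX_mid n Xo Y k : k = n.+1 -> Y = ext_objX n Xo Y k.
Proof. by move=> ->; rewrite /ext_objX eqxx. Qed.
Lemma sh_ext_mid n Mo X A k : k = n.+1 -> Mo n.+1 = A -> sh A = sh (ext_obj n Mo X k).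
Proof. by move=> E1 E2; rewrite -(@ext_mid n Mo X A k E1 E2). Qed.
Lemma sh_ext_lo n Mo X k : (k <= n)%N -> sh (Mo k) = sh (ext_obj n Mo X k).
Proof. by move=> H; rewrite -(@ext_lo n Mo X k H). Qed.

Arguments ext_lo {n Mo} X {k}.
Arguments ext_lo1 {n Mo} X {k}.
Arguments extX_lo {n Xo} Y {k}.
Arguments ext_mid {n Mo} X {A k}.
Arguments ext_mid1 {n} Mo X {k}.
Arguments extX_mid {n} Xo Y {k}.
Arguments sh_ext_mid {n Mo} X {A k}.
Arguments sh_ext_lo {n Mo} X {k}.
Section Append.
Variables (P : C -> Prop) (A X Y : C) (FA : filtration T P A).
Variables (f : Mor A X) (g : Mor X Y) (h : Mor Y (sh A)).
Hypotheses (d : dist f g h) (PY : P Y).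
Let n := flen FA.
Let Mo := fM FA.
Let Xo := fX FA.
Let e := f_end FA.

Definition app_fa k : Mor (ext_obj n Mo X k) (ext_obj n Mo X k.+1) :=
  match leqP k n with
  | LeqNotGtn H => castM (ext_lo X H) (ext_lo1 X H) (fa FA k)
  | GtnNotLeq _ => match eqVneq k n.+1 with
     | EqNotNeq E => castM (ext_mid X E e) (ext_mid1 Mo X E) f
     | NeqNotEq _ => 0 end end.
Definition app_fb k : Mor (ext_obj n Mo X k.+1) (ext_objX n Xo Y k) :=
  match leqP k n with
  | LeqNotGtn H => castM (ext_lo1 X H) (extX_lo Y H) (fb FA k)
  | GtnNotLeq _ => match eqVneq k n.+1 with
     | EqNotNeq E => castM (ext_mid1 Mo X E) (extX_mid Xo Y E) g
     | NeqNotEq _ => 0 end end.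
Definition app_fc k : Mor (ext_objX n Xo Y k) (sh (ext_obj n Mo X k)) :=
  match leqP k n with
  | LeqNotGtn H => castM (extX_lo Y H) (sh_ext_lo X H) (fc FA k)
  | GtnNotLeq _ => match eqVneq k n.+1 with
     | EqNotNeq E => castM (extX_mid Xo Y E) (sh_ext_mid X E e) h
     | NeqNotEq _ => 0 end end.

Lemma append_filt : inF T P X.
Proof.
constructor.
refine (@Build_filtration _ _ T P X n.+1 (ext_obj n Mo X) (ext_objX n Xo Y)
  app_fa app_fb app_fc _ _ _ _ _).
- move=> k Hk; rewrite /app_fa /app_fb /app_fc.
  case: (leqP k n) => H.
    by apply: dist_cast; apply: f_dist.
  case: eqVneq => [E|E].
    exact: dist_cast.
  by move: E; rewrite eqn_leq Hk H.
- rewrite /ext_obj /=; exact: f_start.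
- rewrite /ext_objX /=; exact: f_X0.
- move=> k /andP [k1 kn]; rewrite /ext_objX; case: eqP => // E.
  apply: f_XP; rewrite k1 /=; rewrite leq_eqVlt in kn; case/orP: kn => //.
  by move/eqP.
- by rewrite /ext_obj eqxx.
Qed.
End Append.

Lemma inF_zero (P : C -> Prop) (X : C) : is_zero X -> inF T P X.
Proof.
move=> z; constructor.
refine (@Build_filtration _ _ T P X 0 (fun _ => X) (fun _ => X)
  (fun _ => idm X) (fun _ => 0) (fun _ => 0) _ _ _ _ _) => //.
- by move=> k _; apply: dist_id0.
- by move=> k /andP [k1 k0]; move: (leq_trans k1 k0).
Qed.

Lemma inF_mono (P P' : C -> Prop) (X : C) :
  (forall Y, P Y -> P' Y) -> inF T P X -> inF T P' X.
Proof.
move=> HP [F]; constructor.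
refine (@Build_filtration _ _ T P' X (flen F) (fM F) (fX F)
  (fa F) (fb F) (fc F) (@f_dist _ _ _ _ _ F) (f_start F) (f_X0 F) _ (f_end F)).
by move=> k Hk; apply: HP; apply: (@f_XP _ _ _ _ _ F).
Qed.

Inductive Fil (P : C -> Prop) : C -> Prop :=
  | Fil0 X : is_zero X -> Fil P X
  | FilS A X Y (f : Mor A X) (g : Mor X Y) (h : Mor Y (sh A)) :
      dist f g h -> Fil P A -> P Y -> Fil P X.

Lemma Fil_inF (P : C -> Prop) (X : C) : Fil P X -> inF T P X.
Proof.
elim=> [Z z|A Z Y f g h d _ [FA] PY]; first exact: inF_zero.
exact: append_filt d PY.
Qed.

Lemma filt_step_zero (P : C -> Prop) (M : C) (F : filtration T P M) k :
  (k <= flen F)%N -> (k = 0)%N /\ is_zero (fX F k) \/ P (fX F k).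
Proof.
case: k => [|k] Hk; first by left; split=> //; exact: f_X0.
by right; apply: f_XP; rewrite Hk.
Qed.

Arguments filt_step_zero {P M} F {k}.
Lemma G_cov (P : C -> Prop) (M : C) (F : filtration T P M) (Z : C) :
  (forall Y, P Y -> forall u : Mor Z Y, u = 0) -> forall u : Mor Z M, u = 0.
Proof.
move=> HP; rewrite -(f_end F).
suff: forall k, (k <= (flen F).+1)%N -> forall u : Mor Z (fM F k), u = 0.
  by apply.
elim=> [|k IH] Hk u; first exact: zero_tgt (f_start F).
have d := @f_dist _ _ _ _ _ F k Hk.
have [v ->] := dist_cov (u := u) d ltac:(case: (filt_step_zero F Hk) => [[_ z]|PX];
  [exact: zero_tgt z | exact: HP]).
by rewrite (IH (ltnW Hk) v) cm0.
Qed.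

Lemma G_cov_sh_pre (P : C -> Prop) (M : C) (F : filtration T P M) (Z : C) :
  (forall Y, P Y -> forall u : Mor Z (sh Y), u = 0) ->
  forall k, (k <= (flen F).+1)%N -> forall u : Mor Z (sh (fM F k)), u = 0.
Proof.
move=> HP.
elim=> [|k IH] Hk u; first exact: zero_tgt (zero_sh T (f_start F)).
have d := trot (trot (trot (@f_dist _ _ _ _ _ F k Hk))).
have [v ->] := dist_cov (u := u) d ltac:(case: (filt_step_zero F Hk) => [[_ z]|PX];
  [exact: zero_tgt (zero_sh T z) | exact: HP]).
by rewrite (IH (ltnW Hk) v) cm0.
Qed.

Lemma G_cov_sh (P : C -> Prop) (M : C) (F : filtration T P M) (Z : C) :
  (forall Y, P Y -> forall u : Mor Z (sh Y), u = 0) ->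
  forall u : Mor Z (sh M), u = 0.
Proof.
move=> HP; rewrite -(f_end F); exact: G_cov_sh_pre.
Qed.

Lemma G_contra (P : C -> Prop) (M : C) (F : filtration T P M) (W : C) :
  (forall Y, P Y -> forall u : Mor Y W, u = 0) -> forall u : Mor M W, u = 0.
Proof.
move=> HP; rewrite -(f_end F).
suff: forall k, (k <= (flen F).+1)%N -> forall u : Mor (fM F k) W, u = 0.
  by apply.
elim=> [|k IH] Hk u; first exact: zero_src (f_start F).
have d := @f_dist _ _ _ _ _ F k Hk.
have [v ->] := dist_contra (u := u) d (IH (ltnW Hk) _).
by rewrite (_ : v = 0) ?c0m //; case: (filt_step_zero F Hk) => [[_ z]|PX];
  [exact: zero_src z | exact: HP].
Qed.

Lemma ext_along (X Y Z : C) (f : Mor X Y) (g : Mor Y Z) (h : Mor Z (sh X))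
  (W : C) : dist f g h -> (forall u : Mor Z (sh W), u = 0) ->
  forall u : Mor X W, exists v, u = mcomp v f.
Proof.
move=> d HZ u.
have [v' ev] := dist_contra (u := shm u) (trot (trot d)) (HZ _).
case: (shm_surj v') => v0 e0; subst v'; exists (- v0).
by apply: (@shm_inj _ _ T); rewrite ev cNr -shmM' -shmN cNl.
Qed.

Lemma dist_iso_mid (X Y Y' Z : C) (f : Mor X Y) (g : Mor Y Z) (h : Mor Z (sh X))
  (phi : Mor Y Y') (psi : Mor Y' Y) :
  mcomp psi phi = idm Y -> mcomp phi psi = idm Y' ->
  dist f g h -> dist (mcomp phi f) (mcomp g psi) h.
Proof.
move=> e1 e2 d; apply: (dist_iso (b := phi) d (iso_id X) _ (iso_id Z)).
- by exists psi.
- by rewrite cm1.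
- by rewrite c1m -cA e1 cm1.
- by rewrite shm1 c1m cm1.
Qed.
Lemma dist_iso_last (X Y Z Z' : C) (f : Mor X Y) (g : Mor Y Z) (h : Mor Z (sh X))
  (phi : Mor Z Z') (psi : Mor Z' Z) :
  mcomp psi phi = idm Z -> mcomp phi psi = idm Z' ->
  dist f g h -> dist f (mcomp phi g) (mcomp h psi).
Proof.
move=> e1 e2 d; apply: (dist_iso (c := phi) d (iso_id X) (iso_id Y)).
- by exists psi.
- by rewrite cm1 c1m.
- by rewrite cm1.
- by rewrite shm1 c1m -cA e1 cm1.
Qed.
Lemma dist_iso_first (X X' Y Z : C) (f : Mor X Y) (g : Mor Y Z) (h : Mor Z (sh X))
  (phi : Mor X X') (psi : Mor X' X) :
  mcomp psi phi = idm X -> mcomp phi psi = idm X' ->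
  dist f g h -> dist (mcomp f psi) g (mcomp (shm phi) h).
Proof.
move=> e1 e2 d; apply: (dist_iso (a := phi) d _ (iso_id Y) (iso_id Z)).
- by exists psi.
- by rewrite c1m -cA e1 cm1.
- by rewrite cm1 c1m.
- by rewrite cm1.
Qed.

Lemma Fil_iso (P : C -> Prop) (A B : C) : Fil P A -> iso A B -> Fil P B.
Proof.
case=> [Z z|A' Z Y f g h d FA PY] [phi [psi [e1 e2]]].
  by apply: Fil0; rewrite /is_zero -e2 -[phi]cm1 z cm0 c0m.
exact: (FilS (dist_iso_mid e1 e2 d) FA PY).
Qed.

Lemma Fil_ext (P : C -> Prop) (A B Cc : C) (f : Mor A B) (g : Mor B Cc)
  (h : Mor Cc (sh A)) : dist f g h -> Fil P A -> Fil P Cc -> Fil P B.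
Proof.
move=> d FA FC; elim: FC B f g h d => [Z z|C' Z Y r s t dr FC' IH PY] B f g h d.
  have [f' [e1 e2]] := dist_iso_of_zero d z.
  by apply: (Fil_iso FA); exists f; exists f'.
have [Y' [w [k dk]]] := TR1_ext T (mcomp s g).
have [a [b [dab _ _ _ _]]] := TR4 (trot d) (trot dr) dk.
have [B' [phi [psi [e1 e2]]]] := sh_esurj T Y'.
have T1 := dist_iso_last e2 e1 dk.
case: (shm_surj (mcomp k phi)) => be ebe; rewrite ebe in T1.
have T1' : dist (- be) (mcomp s g) (mcomp psi w).
  by apply: trotinv; rewrite shmN opprK.
have T2 := dist_iso_mid e2 e1 dab.
case: (shm_surj (mcomp psi a)) => al eal; rewrite eal in T2.
case: (shm_surj (mcomp b phi)) => ga ega; rewrite ega in T2.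
rewrite cNr -shmM' -shmN in T2.
have := unshift T2; rewrite opprK => T3.
exact: FilS T1' (IH _ _ _ _ T3) PY.
Qed.

Lemma inF_Fil (P : C -> Prop) (M : C) : inF T P M -> Fil P M.
Proof.
case=> F; rewrite -(f_end F).
suff: forall k, (k <= (flen F).+1)%N -> Fil P (fM F k) by apply.
elim=> [|k IH] Hk; first exact/Fil0/(f_start F).
have d := @f_dist _ _ _ _ _ F k Hk.
case: (filt_step_zero F Hk) => [[k0 z]|PX].
  subst k; apply: Fil0; apply: (dist_zero_mid d) z.
  exact: f_start.
exact: FilS d (IH (ltnW Hk)) PX.
Qed.
End Filt.



Section Add.
Variables (R : comPzRingType) (C : RCat R) (T : Triangulated C).

Lemma ch_id (X Y W : C) (g : Mor Y X) (f : Mor X Y) :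
  mcomp g f = idm X -> forall h : Mor W X, mcomp g (mcomp f h) = h.
Proof. by move=> e h; rewrite cA e c1m. Qed.
Lemma ch_0 (X Y Z W : C) (g : Mor Y Z) (f : Mor X Y) :
  mcomp g f = 0 -> forall h : Mor W X, mcomp g (mcomp f h) = 0.
Proof. by move=> e h; rewrite cA e c0m. Qed.

Lemma dsum_kron (I : finType) (P : pred I) (A : I -> C) (S : C)
  (inj : forall k, Mor (A k) S) (proj : forall k, Mor S (A k)) (W : C)
  (F : forall k, Mor W (A k)) l :
  is_dsum P inj proj -> P l ->
  \sum_(m | P m) mcomp (proj l) (mcomp (inj m) (F m)) = F l.
Proof.
case=> e1 e2 _ Pl; rewrite (bigD1 l) //= ch_id ?e1 // big1 ?addr0 //.
by move=> m /andP [Pm ml]; rewrite ch_0 // e2 // eq_sym.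
Qed.
Lemma dsum_kron' (I : finType) (P : pred I) (A : I -> C) (S : C)
  (inj : forall k, Mor (A k) S) (proj : forall k, Mor S (A k)) (W : C)
  (G : forall k, Mor (A k) W) l :
  is_dsum P inj proj -> P l ->
  \sum_(m | P m) mcomp (mcomp (G m) (proj m)) (inj l) = G l.
Proof.
case=> e1 e2 _ Pl; rewrite (bigD1 l) //= -cA e1 // cm1 big1 ?addr0 //.
by move=> m /andP [Pm ml]; rewrite -cA e2 ?cm0.
Qed.

Lemma dsum_exists (I : finType) (A : I -> C) (P : pred I) :
  exists S inj proj, @is_dsum R C I P A S inj proj.
Proof.
have [n] := ubnP #|P|; elim: n P => // n IH P Hn.
case: (pickP P) => [k0 Pk0 | P0]; last first.
  have [Z z] := has_zero T.
  exists Z, (fun k => 0), (fun k => 0); split.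
  - by move=> k; rewrite P0.
  - by move=> k l; rewrite P0.
  - by rewrite big_pred0 // z.
pose P' := fun k => (k != k0) && P k.
have H' : (#|P'| < n)%N.
  have -> : #|P'| = #|[predD1 P & k0]| by apply: eq_card => x; rewrite !inE.
  by move: Hn; rewrite (cardD1 k0) [k0 \in P]unfold_in Pk0 add1n ltnS.
have [S' [inj' [proj' [e1' e2' e3']]]] := IH P' H'.
have [S [i1 [i2 [p1 [p2 [b11 b22 b12 b21 bid]]]]]] := has_biprod T (A k0) S'.
exists S.
exists (fun k => match k =P k0 with
  | ReflectT e => eq_rect_r (fun x => Mor (A x) S) i1 e
  | ReflectF _ => mcomp i2 (inj' k) end).
exists (fun k => match k =P k0 with
  | ReflectT e => eq_rect_r (fun x => Mor S (A x)) p1 e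
  | ReflectF _ => mcomp (proj' k) p2 end).
split.
- move=> k Pk; case: (k =P k0) => [e|ne]; first by subst k.
  by rewrite -cA (ch_id b22) e1' // /P' Pk andbT; apply/eqP.
- move=> k l Pk Pl kl; case: (k =P k0) => [e|ne]; case: (l =P k0) => [e'|ne'].
  + by subst k l; rewrite eqxx in kl.
  + by subst k; rewrite /= ch_0.
  + by subst l; rewrite /= -cA b21 cm0.
  + rewrite -cA (ch_id b22) e2' //; rewrite /P'.
    * by rewrite Pk andbT; apply/eqP.
    * by rewrite Pl andbT; apply/eqP.
- rewrite (bigD1 k0) //=; case: (k0 =P k0) => [e|]; last by [].
  rewrite (eq_irrelevance e erefl) /= -bid; congr (_ + _).
  rewrite (eq_bigl P') => [|k]; last by rewrite /P' andbC.
  rewrite (eq_bigr (fun k => mcomp i2 (mcomp (mcomp (inj' k) (proj' k)) p2))).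
    by rewrite -c_sumr -c_suml e3' c1m.
  move=> k /andP [nk Pk]; case: (k =P k0) => [e'|_]; first by rewrite e' eqxx in nk.
  by rewrite !cA.
Qed.

Lemma dsum_kronQ (I : finType) (P Q : pred I) (A : I -> C) (S : C)
  (inj : forall k, Mor (A k) S) (proj : forall k, Mor S (A k)) (W : C)
  (F : forall k, Mor W (A k)) l :
  is_dsum P inj proj -> (forall m, Q m -> P m) -> Q l ->
  \sum_(m | Q m) mcomp (proj l) (mcomp (inj m) (F m)) = F l.
Proof.
case=> e1 e2 _ QP Ql; rewrite (bigD1 l) //= ch_id ?e1 ?QP // big1 ?addr0 //.
by move=> m /andP [Qm ml]; rewrite ch_0 // e2 ?QP // eq_sym.
Qed.
Lemma dsum_kronQ' (I : finType) (P Q : pred I) (A : I -> C) (S : C)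
  (inj : forall k, Mor (A k) S) (proj : forall k, Mor S (A k)) (W : C)
  (G : forall k, Mor (A k) W) l :
  is_dsum P inj proj -> (forall m, Q m -> P m) -> Q l ->
  \sum_(m | Q m) mcomp (mcomp (G m) (proj m)) (inj l) = G l.
Proof.
case=> e1 e2 _ QP Ql; rewrite (bigD1 l) //= -cA e1 ?QP // cm1 big1 ?addr0 //.
by move=> m /andP [Qm ml]; rewrite -cA e2 ?QP ?cm0.
Qed.

Lemma in_add_zero (X Z : C) : is_zero Z -> in_add X Z.
Proof.
move=> z; exists 0%N, Z; split.
  exists (fun _ => 0), (fun _ => 0); split; try by case.
  by rewrite big_ord0 z.
exists Z, (idm Z), (idm Z), (idm Z), (idm Z); rewrite z.
by split; rewrite ?c0m ?addr0.
Qed.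

Lemma dsum1 (X : C) : is_dsum_of (I := 'I_1) predT (fun _ => X) X.
Proof.
exists (fun _ => idm X), (fun _ => idm X); split.
- by move=> k _; rewrite c1m.
- by move=> k l _ _; rewrite !ord1 eqxx.
- by rewrite big_ord1 c1m.
Qed.

Lemma in_add_summand (I : finType) (P : pred I) (A : I -> C) (X : C)
  (inj : forall k, Mor (A k) X) (proj : forall k, Mor X (A k)) j :
  is_dsum P inj proj -> P j -> in_add X (A j).
Proof.
move=> dX Pj; have [e1 e2 e3] := dX.
pose P' := fun l => (l != j) && P l.
have P'P : forall m, P' m -> P m by move=> m /andP [].
have [Y' [inj' [proj' dY]]] := dsum_exists A P'.
have [e1' e2' e3'] := dY.
exists 1%N, X; split; first exact: dsum1.
exists Y', (inj j), (\sum_(m | P' m) mcomp (inj m) (proj' m)),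
  (proj j), (\sum_(m | P' m) mcomp (inj' m) (proj m)); split.
- exact: e1.
- rewrite c_suml (eq_bigr (fun l => mcomp (inj' l) (proj' l))) ?e3' //.
  move=> l P'l; rewrite -cA c_sumr; congr mcomp.
  rewrite (eq_bigr (fun m => mcomp (proj l) (mcomp (inj m) (proj' m)))) //.
  exact: (dsum_kronQ proj' dX P'P P'l).
- rewrite c_sumr big1 // => m /andP [mj Pm]; rewrite ch_0 // e2 // eq_sym //.
- rewrite c_suml big1 // => m /andP [mj Pm]; rewrite -cA e2 ?cm0 //.
- rewrite c_suml (eq_bigr (fun m => mcomp (inj m) (proj m))).
    rewrite -e3 [RHS](bigD1 j) //=; congr (_ + _).
    by apply: eq_bigl => m; rewrite andbC.
  move=> m P'm; rewrite -cA c_sumr; congr mcomp.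
  rewrite (eq_bigr (fun l => mcomp (proj' m) (mcomp (inj' l) (proj l)))) //.
  exact: (dsum_kronQ proj dY (fun x => id) P'm).
Qed.

Lemma split_lsh m n (i : 'I_m) : split (lshift n i) = inl i.
Proof. exact: (unsplitK (inl i)). Qed.
Lemma split_rsh m n (i : 'I_n) : split (rshift m i) = inr i.
Proof. exact: (unsplitK (inr i)). Qed.

Lemma dsum_biprod (X SA SB S : C) n m
  (s1 : Mor SA S) (s2 : Mor SB S) (t1 : Mor S SA) (t2 : Mor S SB) :
  is_biprod s1 s2 t1 t2 ->
  is_dsum_of (I := 'I_n) predT (fun _ => X) SA ->
  is_dsum_of (I := 'I_m) predT (fun _ => X) SB ->
  is_dsum_of (I := 'I_(n + m)) predT (fun _ => X) S.
Proof.
case=> b11 b22 b12 b21 bid [ia [pa [ea1 ea2 ea3]]] [ib [pb [eb1 eb2 eb3]]].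
exists (fun k => match split k with inl k1 => mcomp s1 (ia k1)
                                  | inr k2 => mcomp s2 (ib k2) end).
exists (fun k => match split k with inl k1 => mcomp (pa k1) t1
                                  | inr k2 => mcomp (pb k2) t2 end).
split.
- move=> k _; case: split_ordP => [k1|k2] _.
    by rewrite -cA (ch_id b11) ea1.
  by rewrite -cA (ch_id b22) eb1.
- move=> k l _ _ kl; case: split_ordP => [k1|k2] ek; case: split_ordP => [l1|l2] el.
  + rewrite -cA (ch_id b11) ea2 //; apply: contraNneq kl => e; by rewrite ek el e.
  + by rewrite -cA (ch_0 b12) cm0.
  + by rewrite -cA (ch_0 b21) cm0.
  + rewrite -cA (ch_id b22) eb2 //; apply: contraNneq kl => e; by rewrite ek el e.
- rewrite big_split_ord /=.
  rewrite (eq_bigr (fun k => mcomp s1 (mcomp (mcomp (ia k) (pa k)) t1)));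
    last by move=> k _; rewrite split_lsh !cA.
  rewrite [X in _ + X](eq_bigr (fun k => mcomp s2 (mcomp (mcomp (ib k) (pb k)) t2)));
    last by move=> k _; rewrite split_rsh !cA.
  by rewrite -!c_sumr -!c_suml ea3 eb3 !c1m.
Qed.

Lemma biprod_swap4 (A B YA YB SA SB Cc Y S : C)
  (a1 : Mor A SA) (a2 : Mor YA SA) (b1 : Mor SA A) (b2 : Mor SA YA)
  (c1 : Mor B SB) (c2 : Mor YB SB) (d1 : Mor SB B) (d2 : Mor SB YB)
  (x1 : Mor A Cc) (x2 : Mor B Cc) (y1 : Mor Cc A) (y2 : Mor Cc B)
  (u1 : Mor YA Y) (u2 : Mor YB Y) (v1 : Mor Y YA) (v2 : Mor Y YB)
  (s1 : Mor SA S) (s2 : Mor SB S) (t1 : Mor S SA) (t2 : Mor S SB) :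
  is_biprod a1 a2 b1 b2 -> is_biprod c1 c2 d1 d2 -> is_biprod x1 x2 y1 y2 ->
  is_biprod u1 u2 v1 v2 -> is_biprod s1 s2 t1 t2 ->
  is_biprod (mcomp s1 (mcomp a1 y1) + mcomp s2 (mcomp c1 y2))
            (mcomp s1 (mcomp a2 v1) + mcomp s2 (mcomp c2 v2))
            (mcomp x1 (mcomp b1 t1) + mcomp x2 (mcomp d1 t2))
            (mcomp u1 (mcomp b2 t1) + mcomp u2 (mcomp d2 t2)).
Proof.
case=> A11 A22 A12 A21 Aid; case=> B11 B22 B12 B21 Bid.
case=> X11 X22 X12 X21 Xid; case=> U11 U22 U12 U21 Uid.
case=> S11 S22 S12 S21 Sid.
split; rewrite ?cDl ?cDr -?cA;
rewrite ?(ch_id A11, ch_id A22, ch_0 A12, ch_0 A21, ch_id B11, ch_id B22,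
  ch_0 B12, ch_0 B21, ch_id X11, ch_id X22, ch_0 X12, ch_0 X21,
  ch_id U11, ch_id U22, ch_0 U12, ch_0 U21, ch_id S11, ch_id S22,
  ch_0 S12, ch_0 S21);
rewrite ?(A11, A22, A12, A21, B11, B22, B12, B21, X11, X22, X12, X21,
  U11, U22, U12, U21, S11, S22, S12, S21);
rewrite ?cm0 ?c0m ?addr0 ?add0r ?cm1 ?c1m //.
rewrite -Sid addrACA; congr (_ + _).
  by rewrite -cDr !cA -cDl Aid c1m.
by rewrite -cDr !cA -cDl Bid c1m.
Qed.

Lemma add_biprod (X A B Cc : C) (x1 : Mor A Cc) (x2 : Mor B Cc)
  (y1 : Mor Cc A) (y2 : Mor Cc B) :
  is_biprod x1 x2 y1 y2 -> in_add X A -> in_add X B -> in_add X Cc.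
Proof.
move=> bC [n [SA [dA [YA [a1 [a2 [b1 [b2 bA]]]]]]]]
  [m [SB [dB [YB [c1 [c2 [d1 [d2 bB]]]]]]]].
have [Y [u1 [u2 [v1 [v2 bY]]]]] := has_biprod T YA YB.
have [S [s1 [s2 [t1 [t2 bS]]]]] := has_biprod T SA SB.
exists (n + m)%N, S; split; first exact: dsum_biprod bS dA dB.
by exists Y; econstructor; econstructor; econstructor; econstructor;
  exact: biprod_swap4 bA bB bC bY bS.
Qed.

Lemma hom_dsum (I : finType) (P : pred I) (A : I -> C) (S : C)
  (inj : forall k, Mor (A k) S) (proj : forall k, Mor S (A k)) (W : C) :
  is_dsum P inj proj ->
  (forall k, P k -> forall u : Mor (A k) W, u = 0) -> forall u : Mor S W, u = 0.
Proof.
case=> _ _ e3 H u; rewrite -(cm1 u) -e3 c_sumr big1 // => k Pk.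
by rewrite cA (H k Pk (mcomp u (inj k))) c0m.
Qed.

Lemma hom_add (X Y W : C) : in_add X Y -> (forall u : Mor X W, u = 0) ->
  forall u : Mor Y W, u = 0.
Proof.
case=> n [S [[inj [proj dS]] [Y' [i1 [i2 [p1 [p2 [e11 _ _ _ _]]]]]]]] H u.
have HS := hom_dsum dS (fun k _ => H).
by rewrite -(cm1 u) -e11 cA (HS (mcomp u p1)) c0m.
Qed.
End Add.



Section Step.
Variables (R : comPzRingType) (C : RCat R) (T : Triangulated C).
Local Notation sh := (sh T).
Local Notation shm := (shm T).
Local Notation dist := (dist T).

Lemma main_step (X : C) (P : C -> Prop) (Nk Qk Mk Mk1 Y K Q : C)
  (ak : Mor Nk Qk) (ek : Mor Qk Mk) (ck : Mor Mk (sh Nk))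
  (m : Mor Mk Mk1) (p : Mor Mk1 Y) (de : Mor Y (sh Mk))
  (al : Mor K Q) (be : Mor Q Y) (ga : Mor Y (sh K)) :
  dist ak ek ck -> dist m p de -> dist al be ga ->
  (forall u : Mor Q (sh Mk), u = 0) ->
  Fil T P Nk -> Fil T P K -> in_add X Qk -> in_add X Q ->
  exists N' Q' (a' : Mor N' Q') (e' : Mor Q' Mk1) (c' : Mor Mk1 (sh N')),
    [/\ dist a' e' c', Fil T P N' & in_add X Q'].
Proof.
move=> dE dT dP HQ FN FK AQk AQ.
have [q eq] := dist_cov (u := be) (trot dT) (HQ (mcomp de be)).
have [Q' [i1 [i2 [p1 [p2 bQ]]]]] := has_biprod T Qk Q.
have [b11 b22 b12 b21 bid] := bQ.
pose e' := mcomp (mcomp m ek) p1 + mcomp q p2.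
have e'i1 : mcomp e' i1 = mcomp m ek.
  by rewrite cDl -!cA b11 b21 cm1 cm0 addr0.
have e'i2 : mcomp e' i2 = q.
  by rewrite cDl -!cA b12 b22 cm1 !cm0 add0r.
have [W [w [ka dW]]] := TR1_ext T (mcomp m ek).
have [A1 [B1 [dA1 _ _ eB1 _]]] := TR4 (trot dE) dT dW.
have [V [w' [ka' dV]]] := TR1_ext T e'.
have dW' : dist (mcomp e' i1) w ka by rewrite e'i1.
have [A3 [B3 [dA3 eA3 _ _ _]]] := TR4 (split_dist T bQ) dV dW'.
have A3E : A3 = mcomp w q.
  by rewrite -[A3]cm1 -b22 cA eA3 -cA e'i2.
have eBA : mcomp B1 A3 = be by rewrite A3E cA eB1 eq.
have dB : dist (mcomp B1 A3) ga (- shm al) by rewrite eBA; exact: trot dP.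
have [A2 [B2 [dA2 _ _ _ _]]] := TR4 dA3 (trot dA1) dB.
have [N' [phi [psi [e1 e2]]]] := sh_esurj T V.
have dV1 := dist_iso_last e2 e1 dV.
case: (shm_surj (mcomp ka' phi)) => a0 ea0; rewrite ea0 in dV1.
have dV2 : dist (- a0) e' (mcomp psi w').
  by apply: trotinv; rewrite shmN opprK.
have dX1 := dist_iso_first e2 e1 dA2.
case: (shm_surj (mcomp A2 phi)) => x ex; rewrite ex in dX1.
case: (shm_surj B2) => y ey; rewrite ey in dX1.
rewrite !cNr -!shmM' -shmN in dX1.
have dX2 := unshift dX1.
case: (shm_surj (- mcomp psi (mcomp B3 A1))) => w0 ew0; rewrite ew0 in dX2.
have dX3 : dist w0 x y by apply: trotinv.
exists N', Q', (- a0), e', (mcomp psi w'); split=> //.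
  exact: Fil_ext dX3 FN FK.
exact: add_biprod bQ AQk AQ.
Qed.
End Step.



Section PS.
Variables (R : comPzRingType) (C : RCat R) (T : Triangulated C).
Variables (t : nat) (PS : proj_system T t).
Local Notation sh := (sh T).
Local Notation shm := (shm T).
Local Notation dist := (dist T).
Local Notation Th := (ps_Theta PS).
Local Notation Qj := (ps_Q PS).
Local Notation le := (ps_le PS).

Definition Pgt (o : option 'I_t) (Y : C) : Prop :=
  exists l, lt_opt PS o (Some l) /\ iso Y (Th l).

Lemma le_lt_trans (a b c : 'I_t) : le a b -> le b c && (b != c) ->
  le a c && (a != c).
Proof.
move=> ab /andP [bc nbc]; rewrite (ps_trans ab bc) /=.
apply: contraNneq nbc => ac; subst c.
by apply/eqP/(ps_anti (p := PS)); rewrite bc ab.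
Qed.

Lemma van_src_iso (Y Y' W : C) : iso Y Y' ->
  (forall u : Mor Y' W, u = 0) -> forall u : Mor Y W, u = 0.
Proof.
case=> f [g [e1 e2]] H u; by rewrite -(cm1 u) -e1 cA (H (mcomp u g)) c0m.
Qed.
Lemma van_tgt_iso (Y Y' Z : C) : iso Y Y' ->
  (forall u : Mor Z Y', u = 0) -> forall u : Mor Z Y, u = 0.
Proof.
case=> f [g [e1 e2]] H u; by rewrite -(c1m u) -e1 -cA (H (mcomp f u)) cm0.
Qed.

Lemma Q_sh_Theta l j (u : Mor (Qj l) (sh (Th j))) : u = 0.
Proof.
have [inj [proj [e1 _ _]]] := ps_Qsum_dsum PS.
by rewrite -(cm1 u) -(e1 l) // cA (ps_Q_shift1 (mcomp u (proj l))) c0m.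
Qed.

Lemma Q_sh_cls l (Y : C) : ThetaCls PS Y -> forall u : Mor (Qj l) (sh Y), u = 0.
Proof.
case=> j Yj; apply: (van_tgt_iso (iso_sh T Yj)); exact: Q_sh_Theta.
Qed.

Lemma Q_sh_pre l (M : C) (F : filtration T (ThetaCls PS) M) k :
  (k <= (flen F).+1)%N -> forall u : Mor (Qj l) (sh (fM F k)), u = 0.
Proof. exact: (@G_cov_sh_pre _ _ T _ _ F _ (@Q_sh_cls l)). Qed.

Lemma Q_sh_F l (M : C) : inF T (ThetaCls PS) M -> forall u : Mor (Qj l) (sh M), u = 0.
Proof. by case=> F; exact: (G_cov_sh F (@Q_sh_cls l)). Qed.

Lemma K_Theta j k : le k j -> forall u : Mor (ps_K PS j) (Th k), u = 0.
Proof.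
move=> kj; have [F] := ps_K_filt PS j; apply: (G_contra F).
move=> Y [l [jl Yl]]; apply: (van_src_iso Yl) => u.
exact: ps_Theta_dir (le_lt_trans kj jl) u.
Qed.

Lemma ext_vanish j k : le k j -> forall u : Mor (Th j) (sh (Th k)), u = 0.
Proof.
move=> kj u; have d := trot (ps_dist PS j).
have [v ->] := dist_contra (u := u) d (Q_sh_Theta _).
case: (shm_surj v) => v0 ->; by rewrite (K_Theta kj v0) shm0 c0m.
Qed.

Lemma beta_nz j : ps_b PS j <> 0.
Proof.
move=> b0; have d := trot (ps_dist PS j).
have [v ev] := dist_contra (u := idm (Th j)) d ltac:(by rewrite c1m b0).
by apply: (ps_Theta_nz (p := PS) (i := j)); rewrite /is_zero ev (ps_K_hom v) c0m.
Qed.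

Lemma inv_min (i0 k : 'I_t) (N : C) (FN : filtration T (ThetaCls PS) N) :
  inF T (Pgt (Some i0)) N -> minF FN (Some k) -> le k i0 -> False.
Proof.
move=> [GN] [[l [/andP [l1 ll] [f [finv [ef1 ef2]]]]] Hmin] ki0.
have Hext : forall m, (m <= flen FN)%N ->
    forall u : Mor (fX FN m) (sh (Th k)), u = 0.
  case=> [|m] Hm u; first exact: zero_src (f_X0 FN).
  have [j Hj] := @f_XP _ _ _ _ _ FN m.+1 Hm.
  move: u; apply: (van_src_iso Hj) => v; apply: ext_vanish; apply: Hmin.
  by exists m.+1; split.
have dl := @f_dist _ _ _ _ _ FN l ll.
have [q' eq'] := dist_cov (u := mcomp finv (ps_b PS k)) (trot dl)
  (Q_sh_pre (l := k) (leqW ll) _).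
have nz0 : mcomp f (fb FN l) <> 0.
  move=> e0; apply: (beta_nz (j := k)).
  by rewrite -[ps_b PS k]c1m -ef2 -cA eq' cA e0 c0m.
suff : forall m, (l.+1 <= m)%N -> (m <= (flen FN).+1)%N ->
    exists u : Mor (fM FN m) (Th k), u <> 0.
  move/(_ (flen FN).+1 ll (leqnn _)); rewrite (f_end FN) => -[u]; apply.
  apply: (G_contra GN) => Y [l' [/= il' Yl']]; apply: (van_src_iso Yl') => v.
  exact: ps_Theta_dir (le_lt_trans ki0 il') v.
elim=> [//|m IH] lm mn.
case: (ltngtP l m) => [lm'|ml|lmE].
  have [u nu] := IH lm' (ltnW mn).
  have dm := @f_dist _ _ _ _ _ FN m mn.
  have [v ev] := ext_along dm (Hext m mn) u.
  by exists v => v0; apply: nu; rewrite ev v0 c0m.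
  by move: lm; rewrite ltnS leqNgt ml.
by subst m; exists (mcomp f (fb FN l)).
Qed.

Lemma main_ind (i : option 'I_t) (M : C) (FM : filtration T (ThetaCls PS) M)
  (Hi : minF FM i) (X : C) (inj : forall k, Mor (Qj k) X)
  (proj : forall k, Mor X (Qj k)) (dX : is_dsum (ge_opt PS i) inj proj) :
  forall k, (1 <= k <= (flen FM).+1)%N ->
  exists N Q0 (a : Mor N Q0) (eps : Mor Q0 (fM FM k)) (c : Mor (fM FM k) (sh N)),
    [/\ dist a eps c, Fil T (Pgt i) N & in_add X Q0].
Proof.
elim=> [//|k IH] /andP [_ Hk].
case: k IH Hk => [|k] IH Hk.
  have z : is_zero (fM FM 1).
    exact: dist_zero_mid (@f_dist _ _ _ _ _ FM 0 (leq0n _)) (f_start FM) (f_X0 FM).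
  exists (fM FM 1), (fM FM 1), (idm _), 0, 0; split.
  - exact: dist_id0.
  - exact: Fil0.
  - exact: in_add_zero.
have [N [Q0 [a [eps [c [dE FN AQ]]]]]] := IH (ltnW Hk).
have dT := @f_dist _ _ _ _ _ FM k.+1 Hk.
have [j [phi [psi [e1 e2]]]] := @f_XP _ _ _ _ _ FM k.+1 Hk.
have Sj : inSuppF FM j by exists k.+1; split=> //; exists phi; exists psi.
have gej : ge_opt PS i j.
  move: Hi; case: (i) => [i0 [_ H]|H] /=; [exact: H | case: (H j Sj)].
have dP := dist_iso_last e2 e1 (ps_dist PS j).
apply: (main_step dE dT dP).
- exact: Q_sh_pre (ltnW Hk).
- exact: FN.
- apply: inF_Fil; apply: inF_mono (ps_K_filt PS j) => Y [l [jl Yl]].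
  exists l; split=> //; move: gej jl; case: (i) => [i0|] //= i0j jl.
  exact: le_lt_trans i0j jl.
- exact: AQ.
- exact: in_add_summand dX gej.
Qed.
End PS.

Theorem theorem5p13_proof (R : comPzRingType) (C : RCat R) (T : Triangulated C)
  (HF : hom_finite C) (t : nat) (PS : proj_system T t)
  (M : C) (FM : filtration T (ThetaCls PS) M) (i : option 'I_t)
  (Hi : minF FM i) :
  exists (N Q0 : C) (a : Mor N Q0) (eps : Mor Q0 M) (c : Mor M (sh T N)),
    [/\ dist T a eps c,
        inF T (ThetaCls PS) N /\
          (exists X : C, is_dsum_of (ge_opt PS i) (ps_Q PS) X /\ in_add X Q0),
        (~ is_zero M -> forall (FN : filtration T (ThetaCls PS) N) (o : option 'I_t),
            minF FN o -> lt_opt PS i o)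
      & is_precover PS eps].
Proof.
have [X [inj [proj dX]]] := dsum_exists T (ps_Q PS) (ge_opt PS i).
have Mz : i = None -> is_zero M.
  move=> iN; subst i; rewrite -(f_end FM).
  case E: (flen FM) => [|n].
    exact: dist_zero_mid (@f_dist _ _ _ _ _ FM 0 (leq0n _)) (f_start FM) (f_X0 FM).
  have H1 : (1 <= 1 <= flen FM)%N by rewrite E.
  have [j Hj] := @f_XP _ _ _ _ _ FM 1 H1.
  by case: (Hi j); exists 1%N; split.
have [N [Q0 [a [eps [c [d FN AQ]]]]]] :=
  main_ind Hi dX (k := (flen FM).+1) (leqnn _).
move: a eps c d FN AQ; rewrite (f_end FM) => a eps c d FN AQ.
have NF : inF T (ThetaCls PS) N.
  apply: inF_mono (Fil_inF FN) => Y [l [_ Yl]]; by exists l.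
exists N, Q0, a, eps, c; split=> //.
- split=> //; exists X; split=> //; by exists inj, proj.
- move=> nz FN' o Ho; case: i Hi dX FN Mz => [i0|] Hi dX FN Mz; last first.
    by case: nz; apply: Mz.
  case: o Ho => [k|] Ho //=.
  case E: (ps_le PS i0 k && (i0 != k)) => //; exfalso.
  apply: (inv_min (Fil_inF FN) Ho).
  move: E; case: eqP => [<-|_]; first by rewrite (ps_refl PS).
  rewrite andbT => /negbT E; case/orP: (ps_total PS i0 k) => //.
  by rewrite (negbTE E).
- split.
    move=> L HL f; apply: (hom_add AQ) => u; apply: (hom_dsum dX) => l _ v.
    exact: Q_sh_F HL v.
  move=> Z f HZ.
  have [g ->] := dist_cov (u := f) (trot d) (HZ N NF (mcomp c f)).
  by exists g.
Qed.

Local Close Scope ring_scope.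
Unset Implicit Arguments.

Theorem theorem5p13 (R : comPzRingType) (C : RCat R) (T : Triangulated C)
  (HF : hom_finite C) (t : nat) (PS : proj_system T t)
  (M : C) (FM : filtration T (ThetaCls PS) M) (i : option 'I_t)
  (Hi : minF FM i) :
  exists (N Q0 : C) (a : Mor N Q0) (eps : Mor Q0 M) (c : Mor M (sh T N)),
    [/\ dist T a eps c,
        inF T (ThetaCls PS) N /\
          (exists X : C, is_dsum_of (ge_opt PS i) (ps_Q PS) X /\ in_add X Q0),
        (~ is_zero M -> forall (FN : filtration T (ThetaCls PS) N) (o : option 'I_t),
            minF FN o -> lt_opt PS i o)
      & is_precover PS eps].
Proof.
exact: (@theorem5p13_proof R C T HF t PS M FM i Hi).
Qed.
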